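(* Assume $l>-\infty$, $r=\infty$, (A2) ($\inf\operatorname{supp}\mu>-\infty$ and there is $y_0\in I$ with $\int_{\mathbb R_+}q(y_0,y_0+ax)\mu(dx)<\infty$ for all $a>0$), and $$\limsup_{x\searrow l}\frac{|\eta(x)|}{x-l}<\infty,\qquad \limsup_{x\nearrow\infty}\frac{|\eta(x)|}{x}<\infty.$$ Then $\liminf_{y\to\infty}G_y(\bar a(y))>0$ and $\liminf_{y\searrow l}G_y(\bar a(y))>0$.
   Context: Let $I=(l,r)$, $\eta\colon\mathbb R\to\mathbb R$ Borel with $\eta\ne0$ on $I$, $1/\eta^2\in L^1_{\mathrm{loc}}(I)$, $\eta=0$ off $I$. $q(y,x)=\int_y^x\int_y^u\frac{2}{\eta^2(z)}dz\,du\in[0,\infty]$ for $y\in I,x\in\mathbb R$. $\mu\ne\delta_0$ is a centered probability measure with finite first moment, $G_y(a)=\int q(y,y+ax)\mu(dx)$, and $\bar a(y)=\frac{l-y}{\inf\operatorname{supp}\mu}$ for $y\in I$. *)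

(* Defs.v *)
From HB Require Import structures.
From mathcomp Require Import all_boot all_order all_algebra.
From mathcomp Require Import all_classical all_reals all_analysis.
Set Implicit Arguments. Unset Strict Implicit. Unset Printing Implicit Defensive.
Import Order.TTheory GRing.Theory Num.Theory.
Import numFieldNormedType.Exports.
Local Open Scope classical_set_scope.
Local Open Scope ring_scope.
Local Open Scope ereal_scope.

Section defs.
Variable R : realType.

Definition inv2eta2 (eta : R -> R) (z : R) : \bar R :=
  if eta z == 0%R then +oo else (2 / (eta z ^+ 2))%:E.

(* q(y,x) = int_y^x int_y^u 2/eta^2(z) dz du, oriented integrals;
   for x < y both orientations flip, giving int_x^y int_u^y. *)
Definition qfun (eta : R -> R) (y x : R) : \bar R :=
  if (y <= x)%R then
    \int[lebesgue_measure]_(u in `[y, x]%classic)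
       \int[lebesgue_measure]_(z in `[y, u]%classic) inv2eta2 eta z
  else
    \int[lebesgue_measure]_(u in `[x, y]%classic)
       \int[lebesgue_measure]_(z in `[u, y]%classic) inv2eta2 eta z.

Definition Gfun (eta : R -> R) (mu : probability R R) (y a : R) : \bar R :=
  \int[mu]_x qfun eta y (y + a * x).

Definition supp (mu : probability R R) : set R :=
  [set x | forall U : set R, open U -> U x -> 0 < mu U].

Definition abar (mu : probability R R) (l y : R) : R :=
  ((l - y) / inf (supp mu))%R.

End defs.

(* Main.v *)
Require Import Defs.
From HB Require Import structures.
From mathcomp Require Import all_boot all_order all_algebra.
From mathcomp Require Import all_classical all_reals all_analysis.
Import Order.TTheory GRing.Theory Num.Theory.
Import numFieldNormedType.Exports.
Local Open Scope classical_set_scope.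
Local Open Scope ring_scope.
Import HBNNSimple.
Lemma int_lb (R : realType) d (T : measurableType d) (mu : {measure set T -> \bar R})
  (D A : set T) (f : T -> \bar R) (c : R) :
  measurable A -> A `<=` D -> (forall x, D x -> (0 <= f x)%E) ->
  (forall x, A x -> (c%:E <= f x)%E) -> 0 <= c ->
  (c%:E * mu A <= \int[mu]_(x in D) f x)%E.
Proof.
move=> mA AD f0 fc c0.
rewrite ge0_integralE//.
apply: ereal_sup_ubound => /=.
exists (scale_nnsfun (indic_nnsfun R mA) c0).
  move=> x /=; rewrite /patch /measurable_realfun.mindic indicE.
  case: (boolP (x \in A)) => [Ax|nAx]; try rewrite inE in Ax.
    have Dx : x \in D by rewrite inE; apply: AD.
    by rewrite Dx mulr1; apply: fc.
  by rewrite mulr0; case: ifPn => // /[!inE] Dx; apply: f0.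
by rewrite sintegralrM sintegral_indic.
Qed.
Lemma leb_itv (R : realType) (a b : R) : a <= b ->
  lebesgue_measure (`[a, b]%classic : set R) = (b - a)%:E.
Proof.
move=> ab; rewrite lebesgue_measure_itv/= lte_fin.
case: ifPn => [_|]; first by [].
rewrite -leNgt => ba; have -> : b = a by apply/le_anti; rewrite ab ba.
by rewrite subrr.
Qed.
From mathcomp Require Import ring lra measurable_realfun.
Lemma inv2eta2_ge0 (R : realType) (eta : R -> R) z : (0 <= inv2eta2 eta z)%E.
Proof.
rewrite /inv2eta2; case: ifPn => // _; rewrite lee_fin.
by apply: divr_ge0 => //; rewrite sqr_ge0.
Qed.

Lemma qfun_ge0 (R : realType) (eta : R -> R) y x : (0 <= qfun eta y x)%E.
Proof.
rewrite /qfun; case: ifPn => _; apply: integral_ge0 => u _;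
  apply: integral_ge0 => z _; exact: inv2eta2_ge0.
Qed.

Lemma qfun_up (R : realType) (eta : R -> R) (y h x c : R) :
  0 < h -> y + h <= x -> 0 <= c ->
  (forall z, y <= z <= y + h -> (c%:E <= inv2eta2 eta z)%E) ->
  ((c * (h / 2) * (h / 2))%:E <= qfun eta y x)%E.
Proof.
move=> h0 hx c0 hc.
have yx : y <= x by apply: le_trans hx; rewrite lerDl ltW.
rewrite /qfun yx.
have -> : (c * (h / 2) * (h / 2))%:E =
   ((c * (h / 2))%:E * lebesgue_measure (`[(y + h / 2)%R, (y + h)%R]%classic : set R))%E.
  rewrite leb_itv; last by lra.
  by rewrite -EFinM; congr (_%:E); congr (_ * _); field.
apply: int_lb => //.
- move=> u /=; rewrite !in_itv /= => /andP[a b]; apply/andP; split.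
    lra.
  lra.
- move=> u _; apply: integral_ge0 => z _; exact: inv2eta2_ge0.
- move=> u /=; rewrite in_itv /= => /andP[a b].
  have yu : y <= u by lra.
  apply: le_trans (@int_lb _ _ _ lebesgue_measure `[y, u]%classic `[y, u]%classic (inv2eta2 eta) c _ _ _ _ c0) => //.
  + rewrite [X in (_ * X)%E](_ : _ = (u - y)%:E); last exact (@leb_itv R _ _ yu).
    rewrite -EFinM lee_fin ler_wpM2l //.
    lra.
  + by move=> z _; exact: inv2eta2_ge0.
  + move=> z /=; rewrite in_itv /= => /andP[z1 z2]; apply: hc.
    by rewrite z1 /=; apply: le_trans b.
- by apply: mulr_ge0 => //; apply: divr_ge0 => //; apply: ltW.
Qed.

Lemma qfun_down (R : realType) (eta : R -> R) (y h x c : R) :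
  0 < h -> x <= y - h -> 0 <= c ->
  (forall z, y - h <= z <= y -> (c%:E <= inv2eta2 eta z)%E) ->
  ((c * (h / 2) * (h / 2))%:E <= qfun eta y x)%E.
Proof.
move=> h0 hx c0 hc.
have yx : ~~ (y <= x).
  by rewrite -ltNge; lra.
rewrite /qfun (negbTE yx).
have -> : (c * (h / 2) * (h / 2))%:E =
   ((c * (h / 2))%:E * lebesgue_measure (`[(y - h)%R, (y - h / 2)%R]%classic : set R))%E.
  rewrite leb_itv; last by lra.
  by rewrite -EFinM; congr (_%:E); congr (_ * _); field.
apply: int_lb => //.
- move=> u /=; rewrite !in_itv /= => /andP[a b]; apply/andP; split.
    lra.
  lra.
- move=> u _; apply: integral_ge0 => z _; exact: inv2eta2_ge0.
- move=> u /=; rewrite in_itv /= => /andP[a b].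
  have yu : u <= y by lra.
  apply: le_trans (@int_lb _ _ _ lebesgue_measure `[u, y]%classic `[u, y]%classic (inv2eta2 eta) c _ _ _ _ c0) => //.
  + rewrite [X in (_ * X)%E](_ : _ = (y - u)%:E); last exact (@leb_itv R _ _ yu).
    rewrite -EFinM lee_fin ler_wpM2l //.
    lra.
  + by move=> z _; exact: inv2eta2_ge0.
  + move=> z /=; rewrite in_itv /= => /andP[z1 z2]; apply: hc.
    by rewrite z2 andbT; lra.
- by apply: mulr_ge0 => //; apply: divr_ge0 => //; apply: ltW.
Qed.
Lemma einf_lb (R : realType) (f : R -> \bar R) (F : set_system R) (e : \bar R) :
  F [set x | (e <= f x)%E] -> (e <= limf_einf f F)%E.
Proof.
move=> FV; rewrite limf_einfE.
apply: le_ereal_sup_tmp; exists (ereal_inf (f @` [set x | (e <= f x)%E])).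
  by exists [set x | (e <= f x)%E].
by apply: le_ereal_inf_tmp => _ [x /= ex <-].
Qed.

Lemma esup_ub (R : realType) (f : R -> \bar R) (F : set_system R) {FF : Filter F} :
  (limf_esup f F < +oo)%E -> exists C : R, F [set x | (f x <= C%:E)%E].
Proof.
rewrite limf_esupE => /ereal_inf_lt[_ [V FV <-]].
set s := ereal_sup (f @` V) => slt.
have fs : forall x, V x -> (f x <= s)%E.
  by move=> x Vx; apply: ereal_sup_ubound; exists x.
exists (fine s); apply: filterS FV => x /fs /= fxs.
apply: le_trans fxs _; clear fs; move: slt; case: s => //= *; exact: leNye.
Qed.
Lemma mle (R : realType) (mu : {measure set R -> \bar R}) (A B : set R) :
  measurable A -> measurable B -> A `<=` B -> (mu A <= mu B)%E.
Proof. by move=> mA mB AB; apply: le_measure; rewrite ?inE. Qed.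
Arguments mle {R} mu {A B}.

Lemma mu_union0 (R : realType) (mu : {measure set R -> \bar R}) (A : set R)
  (F : nat -> set R) : measurable A -> (forall n, measurable (F n)) ->
  A `<=` \bigcup_n F n -> (forall n, mu (F n) = 0%E) -> mu A = 0%E.
Proof.
move=> mA mF AF F0; apply/eqP; rewrite eq_le measure_ge0 andbT.
apply: le_trans (measure_sigma_subadditive mu mF mA AF) _.
by rewrite eseries0 // => n _ _; rewrite F0.
Qed.

Lemma supp_exists (R : realType) (mu : probability R R) (a b : R) :
  a <= b -> (0 < mu `[a, b]%classic)%E -> exists s, a <= s <= b /\ supp mu s.
Proof.
move=> ab mab.
pose E := [set x | a <= x /\ (0 < mu `[a, x]%classic)%E].
have Eb : E b by [].
have En : E !=set0 by exists b.
have Elb : lbound E a by move=> x [].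
have hE : has_lbound E by exists a.
set s := inf E.
have as_ : a <= s by apply: lb_le_inf.
have sb : s <= b by apply: ge_inf.
exists s; split; first by rewrite as_ sb.
move=> U oU Us.
have : nbhs s U by apply: open_nbhs_nbhs; split.
rewrite nbhs_ballP => -[e /= e0 esU].
have mU : measurable U by apply: open_measurable.
have see : s < s + e by lra.
have [x Ex xs] := inf_lt En see.
have bsub : `]s - e, s + e[%classic `<=` U by rewrite -ball_itv.
have mb : measurable (`]s - e, s + e[%classic : set R) by [].
apply: lt_le_trans (mle mu mb mU bsub).
case: (ltP (s - e / 2) a) => [ha|ha].
  case: Ex => ax max; apply: lt_le_trans max _.
  apply: mle => //.
  move=> z /=; rewrite !in_itv /= => /andP[z1 z2].
  apply/andP; split; lra.
have nE : ~ E (s - e / 2).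
  move=> Es; have := ge_inf hE Es; rewrite -/s; lra.
have m0 : mu `[a, s - e / 2]%classic = 0%E.
  apply/eqP; rewrite eq_le measure_ge0 andbT leNgt; apply/negP => h.
  by apply: nE; split.
case: Ex => ax max.
have sub : `[a, x]%classic `<=` `[a, s - e / 2]%classic `|` `]s - e / 2, x]%classic.
  move=> z /=; rewrite !in_itv /= => /andP[z1 z2].
  case: (leP z (s - e / 2)) => hz; [left|right]; rewrite /= ?in_itv /= ?andbT;
    try (apply/andP; split); lra.
have : (0 < mu `](s - e / 2)%R, x]%classic)%E.
  have h1 := mle mu (measurable_itv _) (measurableU _ _ (measurable_itv _) (measurable_itv _)) sub.
  have h2 := le_trans h1 (measureU2 mu (measurable_itv _) (measurable_itv _)).
  have h3 : (mu `[a, x]%classic <= mu `[a, (s - e / 2)%R]%classic + mu `](s - e / 2)%R, x]%classic)%E := h2.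
  by rewrite m0 add0e in h3; apply: lt_le_trans max h3.
move=> h; apply: lt_le_trans h _.
apply: mle => //.
move=> z /=; rewrite !in_itv /= => /andP[z1 z2].
apply/andP; split; lra.
Qed.
Section prob.
Variables (R : realType) (mu : probability R R).
Hypothesis mu_int : mu.-integrable setT (fun x => x%:E).
Hypothesis mu_centered : (\int[mu]_x x%:E = 0)%E.

Lemma mu0_of (A : set R) (c : R) : 0 < c ->
  (c%:E * mu A <= 0)%E -> mu A = 0%E.
Proof.
move=> c0 h; apply/eqP; rewrite eq_le measure_ge0 andbT leNgt; apply/negP => h1.
have c0' : (0 < c%:E)%E by rewrite lte_fin.
have := mule_gt0 c0' h1; rewrite ltNge h //.
Qed.

Lemma Lpos1 : (\int[mu]_x ((fun x => x%:E)^\+ x) = 0)%E ->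
  forall d, 0 < d -> mu `[d, +oo[%classic = 0%E.
Proof.
move=> h d d0; apply: (@mu0_of _ d d0).
rewrite -h; apply: int_lb => //.
- move=> x Ax; rewrite funeposE; move: Ax; rewrite /= in_itv /= andbT => dx.
  by rewrite le_max lee_fin dx.
- exact: ltW d0.
Qed.

Lemma Lneg1 : (\int[mu]_x ((fun x => x%:E)^\- x) = 0)%E ->
  forall d, 0 < d -> mu `]-oo, - d]%classic = 0%E.
Proof.
move=> h d d0; apply: (@mu0_of _ d d0).
rewrite -h; apply: int_lb => //.
- move=> x Ax; rewrite funenegE; move: Ax; rewrite /= in_itv /= => dx.
  by rewrite le_max lee_fin lerNr dx.
- exact: ltW d0.
Qed.

Lemma Npos : (forall d, 0 < d -> mu `[d, +oo[%classic = 0%E) ->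
  mu `]0, +oo[%classic = 0%E.
Proof.
move=> h.
apply: (@mu_union0 _ mu _ (fun n => `[n.+1%:R^-1, +oo[%classic)) => //.
- move=> x /=; rewrite in_itv /= andbT => /ltr_add_invr[k hk].
  exists k => //=; rewrite in_itv /= andbT; rewrite add0r in hk; exact: ltW.
- by move=> n; apply: h; rewrite invr_gt0.
Qed.

Lemma Nneg : (forall d, 0 < d -> mu `]-oo, - d]%classic = 0%E) ->
  mu `]-oo, 0[%classic = 0%E.
Proof.
move=> h.
apply: (@mu_union0 _ mu _ (fun n => `]-oo, - n.+1%:R^-1]%classic)) => //.
- move=> x /=; rewrite in_itv /= => x0.
  have : 0 < - x by rewrite oppr_gt0.
  move=> /ltr_add_invr[k hk].
  exists k => //=; rewrite in_itv /=; rewrite add0r in hk; rewrite lerNr; exact: ltW.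
- by move=> n; apply: h; rewrite invr_gt0.
Qed.

Lemma Lpos0 : (forall d, 0 < d -> mu `[d, +oo[%classic = 0%E) ->
  (\int[mu]_x ((fun x => x%:E)^\+ x) = 0)%E.
Proof.
move=> /Npos N0.
rewrite (negligible_integral _ _ _ N0) //; last exact: integrable_funepos.
apply: integral0_eq => x [_ /=]; rewrite in_itv /= andbT => /negP; rewrite -leNgt => x0.
by rewrite funeposE; apply/max_idPr; rewrite lee_fin.
Qed.

Lemma Lneg0 : (forall d, 0 < d -> mu `]-oo, - d]%classic = 0%E) ->
  (\int[mu]_x ((fun x => x%:E)^\- x) = 0)%E.
Proof.
move=> /Nneg N0.
rewrite (negligible_integral _ _ _ N0) //; last exact: integrable_funeneg.
apply: integral0_eq => x [_ /=]; rewrite in_itv /= => /negP; rewrite -leNgt => x0.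
by rewrite funenegE; apply/max_idPr; rewrite lee_fin oppr_le0.
Qed.

Lemma Lsw1 : (\int[mu]_x ((fun x => x%:E)^\+ x) = 0)%E ->
  (\int[mu]_x ((fun x => x%:E)^\- x) = 0)%E.
Proof.
move=> h; move: mu_centered; rewrite integralE h sub0e => /eqP.
by rewrite oppe_eq0 => /eqP.
Qed.

Lemma Lsw2 : (\int[mu]_x ((fun x => x%:E)^\- x) = 0)%E ->
  (\int[mu]_x ((fun x => x%:E)^\+ x) = 0)%E.
Proof.
by move=> h; move: mu_centered; rewrite integralE h sube0.
Qed.

Lemma Ldirac : mu `]-oo, 0[%classic = 0%E -> mu `]0, +oo[%classic = 0%E ->
  forall A : set R, measurable A -> mu A = \d_(0 : R) A.
Proof.
move=> h1 h2 A mA.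
have Nz : forall B : set R, measurable B -> ~ B 0 -> mu B = 0%E.
  move=> B mB B0; apply/eqP; rewrite eq_le measure_ge0 andbT.
  apply: le_trans (mle mu mB _ (_ : B `<=` `]-oo, 0[%classic `|` `]0, +oo[%classic)) _.
  - by apply: measurableU.
  - move=> x Bx; case: (ltgtP x 0) => [x0|x0|x0].
    + by left; rewrite /= in_itv.
    + by right; rewrite /= in_itv /= x0.
    + by rewrite x0 in Bx.
  have hU : (mu (`]-oo, 0%R[%classic `|` `]0%R, +oo[%classic) <= mu `]-oo, 0%R[%classic + mu `]0%R, +oo[%classic)%E := measureU2 mu (measurable_itv _) (measurable_itv _).
  by rewrite h1 h2 adde0 in hU.
rewrite diracE; case: (boolP (0 \in A)) => [A0|A0].
  have A0' : A 0 by rewrite -in_setE.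
  have hU : (mu (A `|` ~` A) <= mu A + mu (~` A))%E := measureU2 mu mA (measurableC mA).
  have nC : mu (~` A) = 0%E by apply: Nz; [apply: measurableC|move=> /(_ A0')].
  rewrite setUv probability_setT nC adde0 in hU.
  by apply/le_anti; rewrite hU probability_le1.
have A0' : ~ A 0 by move=> h; move/negP: A0; apply; rewrite in_setE.
by rewrite Nz.
Qed.

Lemma Lnot_dirac : ~ (forall A : set R, measurable A -> mu A = \d_(0 : R) A) ->
  (exists d, 0 < d /\ (0 < mu `[d, +oo[%classic)%E) /\
  (exists d, 0 < d /\ (0 < mu `]-oo, (- d)%R]%classic)%E).
Proof.
move=> nd.
have pos0 : forall g : R -> set R,
   ~ (exists d, 0 < d /\ (0 < mu (g d))%E) -> forall d, 0 < d -> mu (g d) = 0%E.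
  move=> g hn d d0; apply/eqP; rewrite eq_le measure_ge0 andbT leNgt.
  by apply/negP => hp; apply: hn; exists d.
split.
  apply: contrapT => hn.
  have H1 := pos0 (fun d => `[d, +oo[%classic) hn.
  have H2 := Lneg1 (Lsw1 (Lpos0 H1)).
  by apply: nd; apply: Ldirac; [apply: Nneg|apply: Npos].
apply: contrapT => hn.
have H1 := pos0 (fun d => `]-oo, (- d)%R]%classic) hn.
have H2 := Lpos1 (Lsw2 (Lneg0 H1)).
by apply: nd; apply: Ldirac; [apply: Nneg|apply: Npos].
Qed.
End prob.
Lemma inv2_lb (R : realType) (eta : R -> R) z B : eta z != 0 -> `|eta z| <= B ->
  ((2 / B ^+ 2)%:E <= inv2eta2 eta z)%E.
Proof.
move=> nz hB; rewrite /inv2eta2 (negbTE nz) lee_fin.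
have n0 : 0 < `|eta z| by rewrite normr_gt0.
have B0 : 0 < B by apply: lt_le_trans hB.
have e2 : 0 < eta z ^+ 2 by rewrite -real_normK ?num_real // exprn_gt0.
have B2 : 0 < B ^+ 2 by apply: exprn_gt0.
apply: ler_wpM2l => //; rewrite lef_pV2 ?posrE ?B2 ?e2 //.
rewrite -real_normK ?num_real //.
by rewrite ler_sqr ?nnegrE ?normr_ge0 // (ltW B0).
Qed.

Lemma G_lb (R : realType) (eta : R -> R) (mu : probability R R) y a (A : set R) K :
  measurable A -> 0 <= K -> (forall x, A x -> (K%:E <= qfun eta y (y + a * x))%E) ->
  (K%:E * mu A <= Gfun eta mu y a)%E.
Proof.
move=> mA K0 hA; rewrite /Gfun; apply: int_lb => //.
by move=> x _; apply: qfun_ge0.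
Qed.

Lemma inf_supp_le (R : realType) (mu : probability R R) d :
  (exists m : R, forall x, supp mu x -> m <= x) ->
  0 < d -> (0 < mu `]-oo, (- d)%R]%classic)%E -> inf (supp mu) <= - d.
Proof.
move=> [m hm] d0 hp.
have [n hn] : exists n : nat, (0 < mu `[(- d - n%:R)%R, (- d)%R]%classic)%E.
  apply: contrapT => hn.
  have h0 : forall n : nat, mu `[(- d - n%:R)%R, (- d)%R]%classic = 0%E.
    move=> n; apply/eqP; rewrite eq_le measure_ge0 andbT leNgt.
    by apply/negP => hp'; apply: hn; exists n.
  have : mu `]-oo, (- d)%R]%classic = 0%E.
    apply: (@mu_union0 _ mu _ (fun n : nat => `[(- d - n%:R)%R, (- d)%R]%classic)) => //.
    move=> x /=; rewrite in_itv /= => xd.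
    exists (Num.truncn (- d - x)).+1 => //=; rewrite in_itv /= xd andbT.
    have := truncnS_gt (- d - x); lra.
  by move=> h; rewrite h ltxx in hp.
have dn : - d - n%:R <= - d by rewrite lerBlDr lerDl.
have [s [/andP[s1 s2] ss]] := @supp_exists R mu _ _ dn hn.
apply: le_trans s2; apply: ge_inf => //.
by exists m => x /hm.
Qed.
Lemma partA (R : realType) (l : R) (eta : R -> R) (mu : probability R R) (C M dp : R) :
  0 < C -> (forall x, M < x -> `|eta x| <= C * x) -> (forall x, l < x -> eta x != 0) ->
  inf (supp mu) < 0 -> 0 < dp ->
  forall y, M < y -> l < y -> 2 * l <= y -> 0 < y ->
  ((((dp / - inf (supp mu)) / (2 + dp / - inf (supp mu))) ^+ 2 / (2 * C ^+ 2))%:E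
    * mu `[dp, +oo[%classic <= Gfun eta mu y (abar mu l y))%E.
Proof.
move=> C0 hC hnz.
set m := inf (supp mu) => m0 dp0 y My ly l2y y0.
have mp : 0 < - m by rewrite oppr_gt0.
set k := dp / - m.
have k0 : 0 < k by apply: divr_gt0.
have k2 : 0 < 2 + k by lra.
set K := _ / _.
have K0 : 0 <= K by apply: divr_ge0; [apply: sqr_ge0|apply: mulr_ge0 => //; apply: sqr_ge0].
apply: G_lb => // x; rewrite /= in_itv /= andbT => dx.
set a := abar mu l y.
have aE : a = (y - l) / - m.
  have mn : m != 0 by rewrite lt_eqF.
  rewrite /a /abar -/m; field.
  by rewrite mn.
have a0 : 0 < a by rewrite aE divr_gt0 // subr_gt0.
set h := k * (y - l).
have h0 : 0 < h by rewrite /h mulr_gt0 // subr_gt0.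
have hE : a * dp = h by rewrite aE /h /k; field; lra.
have hx : y + h <= y + a * x by rewrite -hE lerD2l ler_wpM2l // ltW.
have yh0 : 0 < y + h by lra.
have B0 : 0 < C * (y + h) by apply: mulr_gt0.
apply: le_trans (@qfun_up R eta y h (y + a * x) (2 / (C * (y + h)) ^+ 2) h0 hx _ _).
- have -> : 2 / (C * (y + h)) ^+ 2 * (h / 2) * (h / 2) = (h / (y + h)) ^+ 2 / (2 * C ^+ 2).
    by field; apply/andP; split; lra.
  rewrite lee_fin /K ler_pM2r ?invr_gt0 ?mulr_gt0 ?exprn_gt0 //.
  have q1 : 0 <= k / (2 + k) by apply: divr_ge0; lra.
  have q2 : 0 <= h / (y + h) by apply: divr_ge0; lra.
  rewrite ler_sqr ?nnegrE ?q1 ?q2 //.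
  rewrite ler_pdivrMr // mulrAC ler_pdivlMr //.
  have : 0 <= k * (y - 2 * l) by apply: mulr_ge0; lra.
  rewrite /h; nra.
- by apply: divr_ge0 => //; apply: sqr_ge0.
- move=> z /andP[z1 z2]; apply: inv2_lb; first by apply: hnz; lra.
  apply: le_trans (hC _ _) _; first by lra.
  by rewrite ler_wpM2l // ltW.
Qed.
Lemma partB (R : realType) (l : R) (eta : R -> R) (mu : probability R R) (C e dn : R) :
  0 < C -> 0 < e -> (forall x, l < x -> x < l + e -> `|eta x| <= C * (x - l)) ->
  (forall x, l < x -> eta x != 0) -> (forall x, x <= l -> eta x = 0) ->
  inf (supp mu) < 0 -> 0 < dn ->
  forall y, l < y -> y < l + e ->
  (((dn / - inf (supp mu)) ^+ 2 / (2 * C ^+ 2))%:E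
    * mu `]-oo, (- dn)%R]%classic <= Gfun eta mu y (abar mu l y))%E.
Proof.
move=> C0 e0 hC hnz hoff.
set m := inf (supp mu) => m0 dn0 y ly yle.
have mp : 0 < - m by rewrite oppr_gt0.
set k := dn / - m.
have k0 : 0 < k by apply: divr_gt0.
set K := _ / _.
have K0 : 0 <= K by apply: divr_ge0; [apply: sqr_ge0|apply: mulr_ge0 => //; apply: sqr_ge0].
apply: G_lb => // x; rewrite /= in_itv /= => dx.
set a := abar mu l y.
have aE : a = (y - l) / - m.
  have mn : m != 0 by rewrite lt_eqF.
  rewrite /a /abar -/m; field.
  by rewrite mn.
have a0 : 0 < a by rewrite aE divr_gt0 // subr_gt0.
set h := k * (y - l).
have h0 : 0 < h by rewrite /h mulr_gt0 // subr_gt0.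
have hE : a * dn = h by rewrite aE /h /k; field; lra.
have hx : y + a * x <= y - h.
  rewrite -hE lerD2l -mulrN ler_wpM2l // ltW //.
have yl0 : 0 < y - l by lra.
have B0 : 0 < C * (y - l) by apply: mulr_gt0.
apply: le_trans (@qfun_down R eta y h (y + a * x) (2 / (C * (y - l)) ^+ 2) h0 hx _ _).
- have -> : 2 / (C * (y - l)) ^+ 2 * (h / 2) * (h / 2) = K.
    by rewrite /K /h; field; apply/andP; split; lra.
  by [].
- by apply: divr_ge0 => //; apply: sqr_ge0.
- move=> z /andP[z1 z2]; case: (leP z l) => zl.
    by rewrite /inv2eta2 hoff // eqxx leey.
  apply: inv2_lb; first by apply: hnz.
  apply: le_trans (hC _ zl _) _; first by lra.
  by apply: ler_wpM2l; [exact: ltW|lra].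
Qed.
Theorem mainTheorem8 (R : realType) (l : R) (eta : R -> R)
  (mu : probability R R)
  (* standing assumptions on eta, with I = (l, +oo) *)
  (eta_meas : measurable_fun setT eta)
  (eta_nz : forall x, l < x -> eta x != 0)
  (eta_off : forall x, x <= l -> eta x = 0)
  (eta_loc : forall a b, l < a -> a <= b ->
     (\int[lebesgue_measure]_(z in `[a, b]) (1 / (eta z ^+ 2))%:E < +oo)%E)
  (* standing assumptions on mu *)
  (mu_int : mu.-integrable setT (fun x => x%:E))
  (mu_centered : (\int[mu]_x x%:E = 0)%E)
  (mu_ndirac : ~ (forall A : set R, measurable A -> mu A = \d_(0 : R) A))
  (* (A2) *)
  (A2_supp : exists m : R, forall x, supp mu x -> m <= x)
  (A2_int : exists y0, l < y0 /\ forall a : R, 0 < a ->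
     (\int[mu]_(x in `[0%R, +oo[) qfun eta y0 (y0 + a * x) < +oo)%E)
  (* growth conditions on eta *)
  (eta_l : (limf_esup (fun x => (`|eta x| / (x - l))%:E) (l^'+) < +oo)%E)
  (eta_inf : (limf_esup (fun x => (`|eta x| / x)%:E) (+oo%R) < +oo)%E) :
  (0 < limf_einf (fun y => Gfun eta mu y (abar mu l y)) (+oo%R))%E /\
  (0 < limf_einf (fun y => Gfun eta mu y (abar mu l y)) (l^'+))%E.
Proof.
have [[dp [dp0 mp]] [dn [dn0 mn]]] := @Lnot_dirac R mu mu_int mu_centered mu_ndirac.
have minf := @inf_supp_le R mu dn A2_supp dn0 mn.
have m0 : inf (supp mu) < 0 by lra.
case: (@esup_ub R _ _ _ eta_inf) => C1 [M [Mr HM]].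
case: (@esup_ub R _ _ _ eta_l) => C2.
rewrite /within /= => /nbhs_ballP [e e0 He].
rewrite ball_itv in He.
set C := Num.max C1 1.
have C0 : 0 < C by rewrite lt_max ltr01 orbT.
set C' := Num.max C2 1.
have C0' : 0 < C' by rewrite lt_max ltr01 orbT.
have hA : forall x, Num.max M 0 < x -> `|eta x| <= C * x.
  move=> x; rewrite gt_max => /andP[Mx x0].
  have := HM x Mx; rewrite /= lee_fin ler_pdivrMr // => h.
  apply: le_trans h _; apply: ler_wpM2r; [exact: ltW|by rewrite le_max lexx].
have hB : forall x, l < x -> x < l + e -> `|eta x| <= C' * (x - l).
  move=> x lx xle.
  have := He x; rewrite /= in_itv /= => /(_ _ lx).
  have xi : l - e < x < l + e by apply/andP; split => //; lra.
  move=> /(_ xi); rewrite lee_fin ler_pdivrMr ?subr_gt0 // => h.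
  apply: le_trans h _; apply: ler_wpM2r; [rewrite subr_ge0; exact: ltW|by rewrite le_max lexx].
split.
  apply: lt_le_trans (@einf_lb R _ _ ((((dp / - inf (supp mu)) / (2 + dp / - inf (supp mu))) ^+ 2 / (2 * C ^+ 2))%:E * mu `[dp, +oo[%classic)%E _); last first.
    exists (Num.max M 0 + 2 * `|l| + 1); split; first exact: num_real.
    move=> y hy /=.
    have h1 : M <= Num.max M 0 by rewrite le_max lexx.
    have h2 : 0 <= Num.max M 0 by rewrite le_max lexx orbT.
    have h3 : l <= `|l| by apply: ler_norm.
    have h4 : - l <= `|l| by rewrite -normrN; apply: ler_norm.
    apply: (@partA R l eta mu C (Num.max M 0) dp C0 hA eta_nz m0 dp0 y); lra.
  apply: mule_gt0 => //; rewrite lte_fin; apply: divr_gt0; last first.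
    by apply: mulr_gt0 => //; apply: exprn_gt0.
  apply: exprn_gt0; apply: divr_gt0; first by apply: divr_gt0; lra.
  have : 0 < dp / - inf (supp mu) by apply: divr_gt0; lra.
  lra.
apply: lt_le_trans (@einf_lb R _ _ (((dn / - inf (supp mu)) ^+ 2 / (2 * C' ^+ 2))%:E * mu `]-oo, (- dn)%R]%classic)%E _); last first.
  rewrite /within /=; apply/nbhs_ballP; exists e => //.
  rewrite ball_itv => y /=; rewrite in_itv /= => /andP[y1 y2] ly.
  exact: (@partB R l eta mu C' e dn C0' e0 hB eta_nz eta_off m0 dn0 y ly y2).
apply: mule_gt0 => //; rewrite lte_fin; apply: divr_gt0.
  apply: exprn_gt0; apply: divr_gt0; lra.
by apply: mulr_gt0 => //; apply: exprn_gt0.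
Qed.
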